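(* Let $n\ge2$, let $x_1=0$ and let $x_2,\dots,x_n$ be arbitrary real numbers. Then for every $\alpha>0$, $$\frac{\sum_{i=1}^n x_ie^{-\alpha x_i}}{\sum_{j=1}^n e^{-\alpha x_j}}\le\frac{\ln n}{\alpha}.$$ *)

(* Defs.v *)
From Stdlib Require Export Reals.

(* Main.v *)
Require Import Defs.
From Stdlib Require Import Reals Lra Lia.
Open Scope R_scope.

Lemma sum_ge_first (f : nat -> R) (N : nat) :
  (forall i, 0 < f i) -> f 0%nat <= sum_f_R0 f N.
Proof.
  intros H; induction N as [|N IH]; simpl; [lra|].
  specialize (H (S N)); lra.
Qed.

Lemma ln_le_sub1 (a : R) : 0 < a -> ln a <= a - 1.
Proof.
  intros Ha. pose proof (exp_ineq1_le (ln a)) as H. rewrite exp_ln in H; lra.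
Qed.

(* Indices shifted: x 0, ..., x (n-1) stand for x_1, ..., x_n;
   sum_f_R0 f (n-1) = f 0 + ... + f (n-1). *)
Theorem lemma4 (n : nat) (x : nat -> R) (alpha : R) :
  (2 <= n)%nat -> x 0%nat = 0 -> 0 < alpha ->
  sum_f_R0 (fun i => x i * exp (- alpha * x i)) (n - 1)
    / sum_f_R0 (fun j => exp (- alpha * x j)) (n - 1)
  <= ln (INR n) / alpha.
Proof.
  intros Hn Hx0 Ha.
  set (w := fun j => exp (- alpha * x j)).
  set (N := (n - 1)%nat).
  set (S0 := sum_f_R0 w N).
  set (T := sum_f_R0 (fun i => x i * exp (- alpha * x i)) N).
  set (L := ln (INR n)).
  assert (Hw : forall i, 0 < w i) by (intros; unfold w; apply exp_pos).
  assert (HS1 : 1 <= S0).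
  { unfold S0. pose proof (sum_ge_first w N Hw) as H. unfold w in H at 1.
    rewrite Hx0, Rmult_0_r, exp_0 in H. exact H. }
  assert (HnR : 0 < INR n) by (apply lt_0_INR; lia).
  assert (HlnS : 0 <= ln S0).
  { destruct (Rle_lt_or_eq_dec 1 S0 HS1) as [H|H].
    - pose proof (ln_increasing 1 S0 ltac:(lra) H). rewrite ln_1 in H0; lra.
    - rewrite <- H, ln_1; lra. }
  assert (Hpt : forall i, x i * w i * alpha + w i * ln S0 - w i * L
                          <= S0 / INR n - w i).
  { intros i.
    assert (Hai : 0 < S0 / (INR n * w i)).
    { apply Rdiv_lt_0_compat; [lra|]. apply Rmult_lt_0_compat; auto. }
    pose proof (ln_le_sub1 _ Hai) as H.
    assert (Hl : ln (S0 / (INR n * w i)) = ln S0 - L + alpha * x i).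
    { unfold Rdiv. rewrite ln_mult by (try lra; apply Rinv_0_lt_compat, Rmult_lt_0_compat; auto).
      rewrite ln_Rinv by (apply Rmult_lt_0_compat; auto).
      rewrite ln_mult by auto. unfold w; rewrite ln_exp. unfold L; ring. }
    rewrite Hl in H.
    pose proof (Hw i) as Hwi.
    apply Rmult_le_compat_l with (r := w i) in H; [|lra].
    replace (w i * (S0 / (INR n * w i) - 1)) with (S0 / INR n - w i) in H
      by (field; split; lra).
    nra. }
  assert (Hsum : alpha * T + S0 * ln S0 - S0 * L <= 0).
  { pose proof (sum_Rle _ _ N (fun i _ => Hpt i)) as H.
    rewrite minus_sum, minus_sum, sum_plus, sum_cte in H.
    rewrite <- (scal_sum (fun i => x i * w i)) in H.
    rewrite <- (scal_sum w N (ln S0)), <- (scal_sum w N L) in H.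
    replace (Datatypes.S N) with n in H by (unfold N; lia).
    fold S0 in H.
    replace (S0 / INR n * INR n) with S0 in H by (field; lra).
    unfold T. unfold w in H. lra. }
  fold T. fold S0.
  assert (HT : alpha * T <= S0 * L) by nra.
  apply Rmult_le_reg_r with (r := alpha * S0); [nra|].
  replace (T / S0 * (alpha * S0)) with (alpha * T) by (field; lra).
  replace (L / alpha * (alpha * S0)) with (S0 * L) by (field; lra).
  exact HT.
Qed.
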